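(* Let $f:\mathbb{N}\to[0,\infty)$ be a decreasing function with $\sum_{n=1}^\infty f(n)=\infty$. (1) If $A\subseteq\mathbb{N}$ satisfies $\liminf_{N\to\infty}\frac1N\sum_{n=1}^N\mathbbm{1}(n\in A)>0$, then \[ \sum_{n\in A}f(n)=\infty \qquad\text{and}\qquad \liminf_{N\to\infty}\frac{\sum_{n=1}^N\mathbbm{1}(n\in A)f(n)}{\sum_{n=1}^Nf(n)}>0. \] (2) There exists a convex, strictly increasing function $a:\mathbb{N}\to\mathbb{N}$ with $\lim_{n\to\infty}(a(n)-a(n-1))=\infty$ such that $\sum_{n=1}^\infty f(a(n))=\infty$. *)

(* Defs.v *)
(* Stdlib reals + Coquelicot. Natural numbers N = {1,2,...} are modelled
   by nat, with all hypotheses/conclusions restricted to indices n >= 1. *)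
From Stdlib Require Import Reals.
From Coquelicot Require Import Coquelicot.
Open Scope R_scope.

Definition psum (u : nat -> R) (N : nat) : R := sum_n_m u 1 N.

Definition indic (A : nat -> bool) (g : nat -> R) (n : nat) : R :=
  if A n then g n else 0.

Definition diverges (u : nat -> R) : Prop := is_lim_seq (psum u) p_infty.

Definition decr_nonneg (f : nat -> R) : Prop :=
  (forall n, (1 <= n)%nat -> 0 <= f n) /\
  (forall m n, (1 <= m)%nat -> (m <= n)%nat -> f n <= f m).

(* Main.v *)
Require Import Defs.
From Stdlib Require Import Reals Lra Lia Classical ZArith.
From Coquelicot Require Import Coquelicot.
Open Scope R_scope.

Lemma psum0 u : psum u 0 = 0.
Proof. unfold psum. rewrite sum_n_m_zero; [reflexivity|lia]. Qed.

Lemma psumS u N : psum u (S N) = psum u N + u (S N).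
Proof. unfold psum. rewrite sum_n_Sm; [reflexivity|lia]. Qed.

Lemma psum_mono (f : nat -> R) : decr_nonneg f -> forall N k, psum f N <= psum f (N + k).
Proof.
  intros [h0 _] N k. induction k. rewrite Nat.add_0_r; lra.
  rewrite Nat.add_succ_r, psumS. specialize (h0 (S (N+k)) ltac:(lia)). lra.
Qed.

Fixpoint sap (f : nat -> R) (p D k : nat) : R :=
  match k with O => 0 | S k => sap f p D k + f (p + S k * D)%nat end.

Lemma block f q : decr_nonneg f -> (1 <= q)%nat -> forall i,
  INR i * f q >= psum f (q + i) - psum f q.
Proof.
  intros [h0 h1] hq. induction i. rewrite Nat.add_0_r. simpl; lra.
  rewrite Nat.add_succ_r, psumS, S_INR.
  assert (f (S (q+i)) <= f q) by (apply h1; lia). lra.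
Qed.

Lemma sap_bound f p D : decr_nonneg f -> (1 <= p)%nat -> forall k,
  INR D * sap f p D k >= psum f (p + S k * D) - psum f (p + D).
Proof.
  intros hf hp. induction k.
  - simpl. replace (p + (D + 0))%nat with (p + D)%nat by lia. lra.
  - change (sap f p D (S k)) with (sap f p D k + f (p + S k * D)%nat). rewrite Rmult_plus_distr_l.
    assert (INR D * f (p + S k * D)%nat >= psum f (p + S (S k) * D) - psum f (p + S k * D)).
    { replace (p + S (S k) * D)%nat with (p + S k * D + D)%nat by lia.
      apply block; auto; lia. }
    lra.
Qed.

Lemma sap_unbounded f p D : decr_nonneg f -> diverges f -> (1 <= p)%nat -> (1 <= D)%nat ->
  forall B, exists k, B < sap f p D k.
Proof.
  intros hf hd hp hD B.
  apply is_lim_seq_spec in hd.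
  destruct (hd (INR D * B + psum f (p + D))) as [N HN].
  exists N. specialize (HN (p + S N * D)%nat ltac:(nia)).
  pose proof (sap_bound f p D hf hp N).
  assert (0 < INR D) by (apply lt_0_INR; lia).
  apply (Rmult_lt_reg_l (INR D)); lra.
Qed.

Definition step (f : nat -> R) (s : nat * nat * R) : nat * nat * R :=
  let '(a, d, c) := s in
  if Rle_dec 1 (c + f (a + d)%nat) then ((a + d)%nat, S d, 0)
  else ((a + d)%nat, d, c + f (a + d)%nat).

Fixpoint st f n := match n with O => (1%nat, 1%nat, 0) | S n => step f (st f n) end.
Definition sa f n := fst (fst (st f n)).
Definition sd f n := snd (fst (st f n)).
Definition sc f n := snd (st f n).

Lemma st_spec f n : sa f (S n) = (sa f n + sd f n)%nat /\
  ((sd f (S n) = sd f n /\ sc f (S n) = sc f n + f (sa f (S n)) /\ sc f (S n) < 1) \/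
   (sd f (S n) = S (sd f n) /\ sc f (S n) = 0 /\ 1 <= sc f n + f (sa f (S n)))).
Proof.
  unfold sa, sd, sc. simpl. destruct (st f n) as [[a d] c]. simpl.
  destruct (Rle_dec 1 (c + f (a + d)%nat)); simpl.
  - split; [reflexivity|]. right; repeat split; lra.
  - split; [reflexivity|]. left; repeat split; lra.
Qed.

Lemma st_inv f : decr_nonneg f -> forall n,
  (1 <= sa f n)%nat /\ (1 <= sd f n)%nat /\ 0 <= sc f n /\ sc f n < 1 /\
  psum (fun m => f (sa f m)) n >= INR (sd f n) - 1 + sc f n.
Proof.
  intros hf. induction n.
  - unfold sa, sd, sc; simpl. rewrite psum0. repeat split; try lia; simpl; lra.
  - destruct IHn as (h1 & h2 & h3 & h4 & h5).
    destruct (st_spec f n) as [ha [(e1 & e2 & e3) | (e1 & e2 & e3)]];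
    rewrite psumS; assert (0 <= f (sa f (S n))) by (apply (proj1 hf); lia);
    repeat split; try lia; try lra.
    + rewrite e1. lra.
    + rewrite e1, S_INR. lra.
Qed.

Lemma sd_mono f : forall n k, (sd f n <= sd f (n + k))%nat.
Proof.
  intros n k. induction k. rewrite Nat.add_0_r; lia.
  rewrite Nat.add_succ_r. destruct (st_spec f (n + k)) as [_ [(e1 & _) | (e1 & _)]]; lia.
Qed.

Lemma sd_unb f : decr_nonneg f -> diverges f -> forall n, exists m, (sd f n < sd f m)%nat.
Proof.
  intros hf hd n. apply NNPP. intros H.
  assert (Hle : forall m, (sd f m <= sd f n)%nat).
  { intros m. apply Nat.nlt_ge. intros Hl. apply H. eauto. }
  assert (Hk : forall k, sd f (n + k) = sd f n /\ sa f (n + k) = (sa f n + k * sd f n)%nat /\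
     sc f (n + k) = sc f n + sap f (sa f n) (sd f n) k).
  { induction k.
    - rewrite Nat.add_0_r. simpl. repeat split; auto; lia || lra.
    - destruct IHk as (i1 & i2 & i3). rewrite Nat.add_succ_r.
      destruct (st_spec f (n + k)) as [ha [(e1 & e2 & e3) | (e1 & e2 & e3)]].
      + assert (sa f (S (n + k)) = (sa f n + S k * sd f n)%nat) by (rewrite ha, i2, i1; lia).
        repeat split; try lia.
        rewrite e2, i3, H0. change (sap f (sa f n) (sd f n) (S k)) with (sap f (sa f n) (sd f n) k + f (sa f n + S k * sd f n)%nat). lra.
      + specialize (Hle (S (n + k))). lia. }
  destruct (st_inv f hf n) as (h1 & h2 & h3 & h4 & h5).
  destruct (sap_unbounded f (sa f n) (sd f n) hf hd h1 h2 1) as [k Hkk].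
  destruct (Hk k) as (_ & _ & e).
  destruct (st_inv f hf (n + k)) as (_ & _ & _ & h6 & _). lra.
Qed.

Lemma nat_above (M : R) : exists D : nat, M < INR D.
Proof.
  destruct (archimed M) as [h _].
  destruct (Z_le_gt_dec 0%Z (up M)) as [hz|hz].
  - exists (Z.to_nat (up M)). rewrite INR_IZR_INZ, Z2Nat.id; [lra|lia].
  - exists 0%nat. simpl. assert (hz2 : (up M < 0)%Z) by lia. apply IZR_lt in hz2. lra.
Qed.

Lemma sd_big f : decr_nonneg f -> diverges f -> forall D, exists m, (D <= sd f m)%nat.
Proof.
  intros hf hd D. induction D. exists 0%nat; lia.
  destruct IHD as [m Hm]. destruct (sd_unb f hf hd m) as [m' H]. exists m'; lia.
Qed.

Lemma part2 f : decr_nonneg f -> diverges f ->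
  (exists a : nat -> nat,
     (forall n, (1 <= n)%nat -> (1 <= a n)%nat) /\
     (forall n, (1 <= n)%nat -> (a n < a (S n))%nat) /\
     (forall n, (2 <= n)%nat ->
        INR (a n) - INR (a (n - 1)%nat) <= INR (a (S n)) - INR (a n)) /\
     is_lim_seq (fun n => INR (a n) - INR (a (n - 1)%nat)) p_infty /\
     diverges (fun n => f (a n))).
Proof.
  intros hf hd. exists (sa f).
  assert (Hdiff : forall m, INR (sa f (S m)) - INR (sa f m) = INR (sd f m)).
  { intros m. rewrite (proj1 (st_spec f m)), plus_INR. lra. }
  repeat split.
  - intros n _. apply (st_inv f hf n).
  - intros n _. rewrite (proj1 (st_spec f n)). pose proof (st_inv f hf n). lia.
  - intros n hn. destruct n as [|m]; [lia|]. replace (S m - 1)%nat with m by lia.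
    rewrite !Hdiff. apply le_INR. rewrite <- Nat.add_1_r. apply (sd_mono f m 1).
  - apply is_lim_seq_spec. intros M. destruct (nat_above M) as [D HD].
    destruct (sd_big f hf hd D) as [m Hm]. exists (S m). intros n hn.
    destruct n as [|n]; [lia|]. replace (S n - 1)%nat with n by lia.
    rewrite Hdiff. pose proof (sd_mono f m (n - m)). replace (m + (n - m))%nat with n in H by lia.
    apply le_INR in Hm. apply le_INR in H. lra.
  - unfold diverges. apply is_lim_seq_spec. intros M. destruct (nat_above (M + 1)) as [D HD].
    destruct (sd_big f hf hd D) as [m Hm]. exists m. intros n hn.
    pose proof (sd_mono f m (n - m)). replace (m + (n - m))%nat with n in H by lia.
    destruct (st_inv f hf n) as (_ & _ & h3 & _ & h5).
    apply le_INR in Hm. apply le_INR in H. lra.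
Qed.
Lemma liminf_pos u : Rbar_lt 0 (LimInf_seq u) ->
  exists d, 0 < d /\ exists N0, forall n, (N0 <= n)%nat -> d < u n.
Proof.
  unfold LimInf_seq. destruct (ex_LimInf_seq u) as [l Hl]. simpl.
  destruct l as [r| |]; simpl in *; intros H.
  - assert (hr : 0 < r / 2) by lra.
    destruct (Hl (mkposreal _ hr)) as [_ [N HN]]. exists (r/2). split; auto.
    exists N. intros n hn. specialize (HN n hn). simpl in HN. lra.
  - destruct (Hl 1) as [N HN]. exists 1. split; [lra|eauto].
  - contradiction.
Qed.

Lemma key f A : decr_nonneg f -> diverges f ->
  Rbar_lt (Finite 0) (LimInf_seq (fun N => psum (indic A (fun _ => 1)) N / INR N)) ->
  exists c, 0 < c /\ exists N2, forall N, (N2 <= N)%nat ->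
    c * psum f N <= psum (indic A f) N /\ 0 < psum f N.
Proof.
  intros hf hd hA. destruct (liminf_pos _ hA) as [d [hd0 [N0 HN0]]].
  set (N1 := Nat.max N0 1).
  set (C := psum (indic A (fun _ => 1))).
  set (Sa := psum (indic A f)).
  set (F := psum f).
  assert (HC : forall N, (N1 <= N)%nat -> d * INR N < C N).
  { intros N hN. specialize (HN0 N ltac:(lia)).
    assert (0 < INR N) by (apply lt_0_INR; lia).
    replace (C N) with (C N / INR N * INR N) by (field; lra).
    unfold C. nra. }
  set (H := fun N => Sa N - C N * f N - d * (F N - INR N * f N)).
  assert (HH : forall k, H N1 <= H (N1 + k)%nat).
  { induction k. rewrite Nat.add_0_r; lra.
    rewrite Nat.add_succ_r.
    set (M := (N1 + k)%nat) in *.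
    assert (HM : H (S M) - H M = (C M - d * INR M) * (f M - f (S M))).
    { unfold H, Sa, C, F. rewrite !psumS, S_INR. unfold indic.
      destruct (A (S M)); ring. }
    assert (0 <= f M - f (S M)) by (pose proof ((proj2 hf) M (S M) ltac:(lia) ltac:(lia)); lra).
    specialize (HC M ltac:(lia)). nra. }
  assert (HS : forall N, (N1 <= N)%nat -> H N1 + d * F N <= Sa N).
  { intros N hN. specialize (HH (N - N1)%nat). replace (N1 + (N - N1))%nat with N in HH by lia.
    specialize (HC N hN). assert (0 <= f N) by (apply (proj1 hf); lia).
    assert (E : H N = Sa N - C N * f N - d * (F N - INR N * f N)) by reflexivity. assert (0 <= (C N - d * INR N) * f N) by (apply Rmult_le_pos; lra). lra. }
  apply is_lim_seq_spec in hd.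
  destruct (hd (Rmax 1 (2 * Rabs (H N1) / d))) as [N2 HN2].
  exists (d / 2). split; [lra|]. exists (Nat.max N1 N2). intros N hN.
  specialize (HN2 N ltac:(lia)). specialize (HS N ltac:(lia)).
  fold F in HN2.
  assert (h1 : 1 < F N) by (eapply Rle_lt_trans; [apply Rmax_l|exact HN2]).
  assert (h2 : 2 * Rabs (H N1) / d < F N) by (eapply Rle_lt_trans; [apply Rmax_r|exact HN2]).
  assert (h3 : 2 * Rabs (H N1) < d * F N).
  { apply (Rmult_lt_compat_l d) in h2; auto. replace (d * (2 * Rabs (H N1) / d)) with (2 * Rabs (H N1)) in h2 by (field; lra). lra. }
  pose proof (Rle_abs (- H N1)). rewrite Rabs_Ropp in H0.
  split; [|lra]. fold Sa. lra.
Qed.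

Lemma part1 f : decr_nonneg f -> diverges f ->
  (forall A : nat -> bool,
     Rbar_lt (Finite 0)
       (LimInf_seq (fun N => psum (indic A (fun _ => 1)) N / INR N)) ->
     diverges (indic A f) /\
     Rbar_lt (Finite 0)
       (LimInf_seq (fun N => psum (indic A f) N / psum f N))).
Proof.
  intros hf hd A hA. destruct (key f A hf hd hA) as [c [hc [N2 HN2]]]. split.
  - unfold diverges. apply is_lim_seq_spec. intros M.
    pose proof hd as hd'. apply is_lim_seq_spec in hd'. destruct (hd' (M / c)) as [N3 HN3].
    exists (Nat.max N2 N3). intros n hn. specialize (HN3 n ltac:(lia)). specialize (HN2 n ltac:(lia)).
    apply (Rmult_lt_compat_l c) in HN3; auto.
    replace (c * (M / c)) with M in HN3 by (field; lra). lra.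
  - assert (Hle : Rbar_le (LimInf_seq (fun _ => c)) (LimInf_seq (fun N => psum (indic A f) N / psum f N))).
    { apply LimInf_le. exists N2. intros n hn. destruct (HN2 n hn) as [h1 h2].
      apply (Rmult_le_reg_r (psum f n)); auto. unfold Rdiv. rewrite Rmult_assoc, Rinv_l; lra. }
    rewrite LimInf_seq_const in Hle.
    destruct (LimInf_seq (fun N => psum (indic A f) N / psum f N)); simpl in *; lra || auto.
Qed.

Theorem lemma2p7 (f : nat -> R) (hf : decr_nonneg f) (hdiv : diverges f) :
  (forall A : nat -> bool,
     Rbar_lt (Finite 0)
       (LimInf_seq (fun N => psum (indic A (fun _ => 1)) N / INR N)) ->
     diverges (indic A f) /\
     Rbar_lt (Finite 0)
       (LimInf_seq (fun N => psum (indic A f) N / psum f N)))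
  /\
  (exists a : nat -> nat,
     (forall n, (1 <= n)%nat -> (1 <= a n)%nat) /\
     (forall n, (1 <= n)%nat -> (a n < a (S n))%nat) /\
     (forall n, (2 <= n)%nat ->
        INR (a n) - INR (a (n - 1)%nat) <= INR (a (S n)) - INR (a n)) /\
     is_lim_seq (fun n => INR (a n) - INR (a (n - 1)%nat)) p_infty /\
     diverges (fun n => f (a n))).
Proof.
  split; [apply part1 | apply part2]; assumption.
Qed.
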